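(* Fix integers $d\ge 1$, $N\ge 1$, $k\ge 1$, $a\in\{1,\dots,N\}$, $b\ge 2$ with $2^{b-1}>N$, a constant $m>0$, and power-law constants $\phi>0$, $\alpha<0$. Let $\mathbf{U}\in\mathbb{R}^d$ be a model-update vector whose entries, ranked in descending order of absolute value as $U\{1\},\dots,U\{d\}$, satisfy the power-law model $|U\{l\}|=\phi\, l^{\alpha}$ for $l=1,\dots,d$ (the paper's power-law assumption, used with equality in the bound), and let $f=\frac{2^{b-1}-N}{Nm}$. Define $$p_l=\frac{l^{\alpha}}{\sum_{l'=1}^d (l')^{\alpha}},\qquad q_l=1-(1-p_l)^k,\qquad r_l=\sum_{j=a}^{N}\binom{N}{j}q_l^{\,j}(1-q_l)^{N-j}.$$ Let $\Pi(\Theta(f\mathbf{U}))$ be the compressed vector obtained by: (i) quantizing each entry $fU_l$ of $f\mathbf{U}$ by the stochastic rounding $\theta$ below; (ii) multiplying the result by $v_l\in\{0,1\}$, where the coordinate holding the $l$-th largest entry $U\{l\}$ has $v_l=1$ with probability $r_l$ (the probability that at least $a$ of the $N$ clients voted for it, each client independently voting for it with probability $q_l$), the selection being independent of the rounding randomness. Then $$\mathbb{E}\big\|\Pi(\Theta(f\mathbf{U}))-f\mathbf{U}\big\|^2\le \gamma\,\|f\mathbf{U}\|^2,\qquad \gamma=1-\frac{\sum_{l=1}^d r_l\, l^{2\alpha}}{\sum_{l=1}^d l^{2\alpha}}+\frac{1}{4f^2}\,\frac{\sum_{l=1}^d r_l}{\phi^2\sum_{l=1}^d l^{2\alpha}}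.$$
   Context: Setting (FediAC in-network federated learning): $N$ clients each hold a model-update vector in $\mathbb{R}^d$. In the voting phase each client votes for $k$ coordinates by $k$ independent draws, the $l$-th largest (in absolute value) coordinate being drawn with probability $p_l$; a coordinate therefore receives that client's vote with probability $q_l$. A programmable switch sums the 0-1 vote arrays and keeps a coordinate (global index array entry $v_l=1$) iff it received at least $a$ votes, otherwise $v_l=0$. Stochastic integer rounding: for a real $x$, $\theta(x)=\lfloor x\rfloor$ with probability $\lceil x\rceil-x$ and $\theta(x)=\lceil x\rceil$ with probability $x-\lfloor x\rfloor$ (so $\mathbb{E}\theta(x)=x$); $\Theta$ applies $\theta$ entrywise. Sparsification $\Pi$ multiplies each entry by $v_l$. Here $m$ denotes the maximum absolute value of model updates and $f$ is the scaling factor applied before quantization to $b$-bit integers. *)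

(* Defs.v *)
From mathcomp Require Import all_boot all_order all_algebra all_fingroup.
From mathcomp Require Import all_classical all_reals all_analysis.
Set Implicit Arguments. Unset Strict Implicit. Unset Printing Implicit Defensive.
Import Order.TTheory GRing.Theory Num.Theory.
Local Open Scope ring_scope.

Section FediAC.
Variable R : realType.

(* p_l, q_l, r_l for the rank l+1 (ranks are 1-based in the paper,
   indices i : 'I_d are 0-based, rank of i is i+1). *)
Definition pl (d : nat) (alpha : R) (l : nat) : R :=
  (l.+1%:R `^ alpha) / (\sum_(l' < d) (l'.+1%:R `^ alpha)).

Definition ql (d k : nat) (alpha : R) (l : nat) : R :=
  1 - (1 - pl d alpha l) ^+ k.

Definition rl (d k N a : nat) (alpha : R) (l : nat) : R :=
  \sum_(a <= j < N.+1) ('C(N, j))%:R * ql d k alpha l ^+ j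
                        * (1 - ql d k alpha l) ^+ (N - j).

(* Stochastic rounding theta(x): ceil x with probability x - floor x,
   floor x with the complementary probability (= ceil x - x when x is
   not an integer; when x is an integer both values equal x). *)
Definition round_up_prob (x : R) : R := x - (Num.floor x)%:~R.

Definition theta_val (up : bool) (x : R) : R :=
  if up then (Num.ceil x)%:~R else (Num.floor x)%:~R.

Definition bern (pr : R) (b : bool) : R := if b then pr else 1 - pr.

(* Squared error || Pi(Theta(x)) - x ||^2 for outcome (v, c):
   v = selection (global index array), c = rounding directions. *)
Definition sq_err (d : nat) (x : 'I_d -> R)
    (v c : {ffun 'I_d -> bool}) : R :=
  \sum_(i < d) ((v i)%:R * theta_val (c i) (x i) - x i) ^+ 2.

Definition outcome_prob (d : nat) (sel x : 'I_d -> R)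
    (v c : {ffun 'I_d -> bool}) : R :=
  \prod_(i < d) (bern (sel i) (v i) * bern (round_up_prob (x i)) (c i)).

Definition expected_sq_err (d : nat) (sel x : 'I_d -> R) : R :=
  \sum_(v : {ffun 'I_d -> bool}) \sum_(c : {ffun 'I_d -> bool})
     outcome_prob sel x v c * sq_err x v c.

Definition sqnorm (d : nat) (x : 'I_d -> R) : R := \sum_(i < d) x i ^+ 2.

End FediAC.

(* Main.v *)
Require Import Defs.
From mathcomp Require Import all_boot all_order all_algebra all_fingroup.
From mathcomp Require Import all_classical all_reals all_analysis.
From mathcomp Require Import ring lra.
Import Order.TTheory GRing.Theory Num.Theory.
Local Open Scope ring_scope.
Lemma factor (R : realType) (d : nat) (w e : 'I_d -> bool -> bool -> R)
  (hw : forall i, \sum_(b : bool) \sum_(b' : bool) w i b b' = 1) :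
  \sum_(v : {ffun 'I_d -> bool}) \sum_(c : {ffun 'I_d -> bool})
     (\prod_(i < d) w i (v i) (c i)) * (\sum_(j < d) e j (v j) (c j))
  = \sum_(j < d) \sum_(b : bool) \sum_(b' : bool) w j b b' * e j b b'.
Proof.
under eq_bigr => v _ do under eq_bigr => c _ do rewrite mulr_sumr.
under eq_bigr => v _ do rewrite exchange_big.
rewrite exchange_big; apply: eq_bigr => j _.
pose F i b b' := w i b b' * (if i == j then e j b b' else 1).
have HF : forall v c : {ffun 'I_d -> bool},
   (\prod_(i < d) w i (v i) (c i)) * e j (v j) (c j) = \prod_(i < d) F i (v i) (c i).
  move=> v c; rewrite /F big_split /=; congr (_ * _).
  rewrite (bigD1 j) //= eqxx big1 ?mulr1 // => i /negbTE ->; by [].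
under eq_bigr => v _ do under eq_bigr => c _ do rewrite HF.
under eq_bigr => v _ do rewrite -(bigA_distr_bigA (fun i b' => F i (v i) b')).
rewrite -(bigA_distr_bigA (fun i b => \sum_(b' : bool) F i b b')) /=.
rewrite (bigD1 j) //= [X in _ * X]big1 ?mulr1.
  by apply: eq_bigr => b _; apply: eq_bigr => b' _; rewrite /F eqxx.
move=> i /negbTE ij; rewrite /F ij -[RHS](hw i); apply: eq_bigr => b _;
  apply: eq_bigr => b' _; by rewrite mulr1.
Qed.
Lemma round_bound (R : realType) (x : R) :
  round_up_prob x * ((Num.ceil x)%:~R - x) ^+ 2
  + (1 - round_up_prob x) * ((Num.floor x)%:~R - x) ^+ 2 <= 1/4.
Proof.
rewrite /round_up_prob.
have /andP[h1 h2] := floor_itv x.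
have h3 : x <= (Num.ceil x)%:~R by have /andP[_ ->] := ceil_itv x.
have h4 : (Num.ceil x)%:~R <= (Num.floor x + 1)%:~R :> R.
  by rewrite ler_int ceil_floor lerD2l; case: (x \isn't a Num.int).
move: h2 h4; rewrite intrD /= => h2 h4.
set fl := (Num.floor x)%:~R : R in h1 h2 h4 *.
set cl := (Num.ceil x)%:~R : R in h3 h4 *.
have ht : 0 <= x - fl by lra.
have hu : 0 <= cl - x by lra.
have hu2 : cl - x <= 1 - (x - fl) by lra.
have : (x - fl) * (cl - x) ^+ 2 <= (x - fl) * (1 - (x - fl)) ^+ 2.
  apply: ler_wpM2l => //; rewrite ler_sqr // ?nnegrE //; lra.
have -> : fl - x = - (x - fl) by ring.
rewrite sqrrN.
set t := x - fl in ht hu2 *.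
set u := cl - x in hu hu2 *.
move=> H.
have E : 4 * (t * (1 - t) ^+ 2 + (1 - t) * t ^+ 2) = 1 - (2 * t - 1) ^+ 2 by ring.
have hsq : 0 <= (2 * t - 1) ^+ 2 by apply: sqr_ge0.
lra.
Qed.

Lemma coord (R : realType) (s x : R) (hs : 0 <= s) :
  \sum_(b : bool) \sum_(b' : bool) (bern s b * bern (round_up_prob x) b')
     * ((b%:R * theta_val b' x - x) ^+ 2) <= (1 - s) * x ^+ 2 + s / 4.
Proof.
rewrite !big_bool /= /theta_val /=.
have := @round_bound R x; set p := round_up_prob x.
set A := ((Num.ceil x)%:~R - x) ^+ 2; set B := ((Num.floor x)%:~R - x) ^+ 2.
move=> hb.
rewrite !mul1r !mul0r !sub0r !sqrrN.
have : s * (p * A + (1 - p) * B) <= s * (1/4) by apply: ler_wpM2l.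
rewrite -/A -/B => H.
have -> : s * p * A + s * (1 - p) * B + ((1 - s) * p * x ^+ 2 + (1 - s) * (1 - p) * x ^+ 2)
  = s * (p * A + (1 - p) * B) + (1 - s) * x ^+ 2 by ring.
lra.
Qed.

Lemma rl_ge0 (R : realType) (d k N a : nat) (alpha : R) (l : 'I_d) :
  0 <= rl d k N a alpha l.
Proof.
have hp0 : 0 <= pl d alpha l.
  by rewrite /pl divr_ge0 // sumr_ge0 // => i _; apply: powR_ge0.
have hp1 : pl d alpha l <= 1.
  rewrite /pl; have ht : 0 < (l.+1)%:R `^ alpha :> R by apply: powR_gt0.
  rewrite ler_pdivrMr; last first.
    rewrite (bigD1 l) //=; apply: (lt_le_trans ht); rewrite lerDl.
    by apply: sumr_ge0 => i _; apply: powR_ge0.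
  rewrite mul1r (bigD1 l) //= lerDl.
  by apply: sumr_ge0 => i _; apply: powR_ge0.
have h1 : 0 <= 1 - pl d alpha l by rewrite subr_ge0.
have h2 : 1 - pl d alpha l <= 1 by rewrite lerBlDr lerDl.
have hq0 : 0 <= ql d k alpha l by rewrite /ql subr_ge0 exprn_ile1.
have hq1 : ql d k alpha l <= 1 by rewrite /ql lerBlDr lerDl exprn_ge0.
rewrite /rl; apply: sumr_ge0 => j _.
rewrite mulr_ge0 ?exprn_ge0 // ?subr_ge0 //.
by rewrite mulr_ge0 // exprn_ge0.
Qed.

Theorem proposition1 (R : realType) (d N k a b : nat) (m phi alpha : R)
  (U : 'I_d -> R) (sigma : 'S_d) :
  (0 < d)%N -> (0 < N)%N -> (0 < k)%N -> (1 <= a <= N)%N -> (2 <= b)%N ->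
  (N < 2 ^ b.-1)%N -> 0 < m -> 0 < phi -> alpha < 0 ->
  (* sigma l is the coordinate holding the (l+1)-th largest |entry| *)
  (forall l : 'I_d, `|U (sigma l)| = phi * (l.+1%:R `^ alpha)) ->
  let f : R := (2 ^+ b.-1 - N%:R) / (N%:R * m) in
  let fU : 'I_d -> R := fun i => f * U i in
  let sel : 'I_d -> R := fun i => rl d k N a alpha (sigma^-1 i)%g in
  let gamma : R :=
    1 - (\sum_(l < d) rl d k N a alpha l * (l.+1%:R `^ (2 * alpha)))
          / (\sum_(l < d) (l.+1%:R `^ (2 * alpha)))
      + 1 / (4 * f ^+ 2) * ((\sum_(l < d) rl d k N a alpha l)
          / (phi ^+ 2 * \sum_(l < d) (l.+1%:R `^ (2 * alpha)))) in
  expected_sq_err sel fU <= gamma * sqnorm fU.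
Proof.
move=> d0 N0 k0 aN b2 Nb m0 phi0 alpha0 hU.
cbv zeta.
set f := (2 ^+ b.-1 - N%:R) / (N%:R * m).
set fU := fun i : 'I_d => f * U i.
set sel := fun i : 'I_d => rl d k N a alpha (sigma^-1%g i).
have f0 : 0 < f.
  rewrite /f divr_gt0 ?mulr_gt0 ?ltr0n // subr_gt0.
  by rewrite -natrX ltr_nat.
pose w (i : 'I_d) (bb bb' : bool) :=
  bern (sel i) bb * bern (round_up_prob (fU i)) bb'.
pose e (i : 'I_d) (bb bb' : bool) := (bb%:R * theta_val bb' (fU i) - fU i) ^+ 2.
have hw : forall i, \sum_(bb : bool) \sum_(bb' : bool) w i bb bb' = 1.
  by move=> i; rewrite !big_bool /w /=; move: (sel i) (round_up_prob _) => s p; ring.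
have E1 : expected_sq_err sel fU =
   \sum_(j < d) \sum_(bb : bool) \sum_(bb' : bool) w j bb bb' * e j bb bb'.
  by rewrite -(@factor R d w e hw).
rewrite E1.
have hsel : forall i, 0 <= sel i by move=> i; apply: rl_ge0.
apply: (le_trans (y := \sum_(j < d) ((1 - sel j) * fU j ^+ 2 + sel j / 4))).
  by apply: ler_sum => j _; apply: coord.
rewrite /sqnorm (reindex_inj (@perm_inj _ sigma)) /=.
rewrite [X in _ <= _ * X](reindex_inj (@perm_inj _ sigma)) /=.
pose A (l : 'I_d) : R := (l.+1%:R `^ alpha).
have hA : forall l : 'I_d, (l.+1%:R `^ (2 * alpha)) = A l ^+ 2 :> R.
  move=> l; rewrite /A mulr2n ?mulrDl mul1r powRD ?expr2 //.
  by apply/implyP => _; rewrite pnatr_eq0.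
have hfU : forall l : 'I_d, fU (sigma l) ^+ 2 = f ^+ 2 * phi ^+ 2 * A l ^+ 2.
  move=> l; rewrite /fU /= exprMn -[U (sigma l) ^+ 2]real_normK ?num_real // hU /A; ring.
have hs : forall l : 'I_d, sel (sigma l) = rl d k N a alpha l.
  by move=> l; rewrite /sel permK.
pose r (l : 'I_d) := rl d k N a alpha l.
pose F := f ^+ 2 * phi ^+ 2.
rewrite (eq_bigr (fun l => F * A l ^+ 2 - F * (r l * A l ^+ 2) + r l / 4)); last first.
  by move=> l _; rewrite hfU hs /F /r; ring.
rewrite [X in _ <= _ * X](eq_bigr (fun l => F * A l ^+ 2)); last first.
  by move=> l _; rewrite hfU.
set T := \sum_(l < d) A l ^+ 2.
set Sr := \sum_(l < d) r l * A l ^+ 2.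
set Srr := \sum_(l < d) r l.
have e1 : \sum_(l < d) rl d k N a alpha l * l.+1%:R `^ (2 * alpha) = Sr.
  by apply: eq_bigr => l _; rewrite hA.
have e2 : \sum_(l < d) l.+1%:R `^ (2 * alpha) = T :> R.
  by apply: eq_bigr => l _; rewrite hA.
rewrite e1 e2 -/Srr.
rewrite !big_split /= sumrN -!mulr_sumr -mulr_suml -/T -/Sr -/Srr.
have T0 : 0 < T.
  rewrite /T (bigD1 (Ordinal d0)) //=.
  have h1 : 0 < A (Ordinal d0) ^+ 2 by rewrite exprn_gt0 // /A powR_gt0 // ltr0n.
  have h2 : 0 <= \sum_(i < d | i != Ordinal d0) A i ^+ 2.
    by apply: sumr_ge0 => i _; apply: sqr_ge0.
  exact: ltr_wpDr h2 h1.
have Fne : f != 0 by rewrite gt_eqF.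
have Pne : phi != 0 by rewrite gt_eqF.
have Tne : T != 0 by rewrite gt_eqF.
rewrite le_eqVlt; apply/orP; left; apply/eqP.
rewrite /F; field.
by rewrite Fne Pne Tne.
Qed.
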